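(* For all integers $n \geq 1$, $r \geq 1$, and $k \geq 0$, \[\binom{k+r-1}{r-1}\left((k+r)^n - (n+1)(k+r-1)^n\right) \leq E_r(n,k) \leq \binom{k+r-1}{r-1}(k+r)^n.\]
   Context: The $r$th order Eulerian number $E_r(n,k)$ is the number of pairs $(w, S)$ with $w$ a permutation of $\{1, \ldots, n\}$ and $S \subset \{1, \ldots, n-1\}$ of size $r-1$ such that exactly $k$ indices $i \in \{1,\ldots,n-1\} \setminus S$ satisfy $w(i) > w(i+1)$. *)

(* Defs.v *)
From mathcomp Require Import all_boot all_order all_algebra all_fingroup.
Set Implicit Arguments. Unset Strict Implicit. Unset Printing Implicit Defensive.

(* Positions {1,...,n} are encoded 0-indexed as 'I_n; position i (0-indexed)
   corresponds to i+1 in the paper.  The index set {1,...,n-1} corresponds to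
   the i : 'I_n with i.+1 < n. *)

Definition descent_at (n : nat) (w : 'S_n) (i : 'I_n) : bool :=
  [exists j : 'I_n, (val j == (val i).+1) && (w j < w i)].

Definition eulerian_r (r n k : nat) : nat :=
  #|[set p : 'S_n * {set 'I_n} |
      [&& p.2 \subset [set i : 'I_n | (val i).+1 < n],
          #|p.2| == r.-1 &
          #|[set i : 'I_n | ((val i).+1 < n) && (i \notin p.2)
                           && descent_at p.1 i]| == k]]|.

(* Main.v *)
Require Import Defs.
From mathcomp Require Import all_boot all_order all_algebra all_fingroup.
From mathcomp Require Import zify.
Set Implicit Arguments. Unset Strict Implicit. Unset Printing Implicit Defensive.

Definition keyf n m (f : {ffun 'I_n -> 'I_m}) (x : 'I_n) : nat := f x * n + x.

Lemma keyf_lt n m (f : {ffun 'I_n -> 'I_m}) x y :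
  (keyf f x < keyf f y) = (f x < f y) || ((f x == f y :> nat) && (x < y)).
Proof.
rewrite /keyf; have := ltn_ord x; have := ltn_ord y.
case: (ltngtP (f x) (f y)) => H /=; nia.
Qed.

Lemma keyf_inj n m (f : {ffun 'I_n -> 'I_m}) : injective (keyf f).
Proof.
move=> x y; rewrite /keyf => E; apply: val_inj => /=.
have := ltn_ord x; have := ltn_ord y.
case: (ltngtP (f x) (f y)) => H; nia.
Qed.

Definition rk n m (f : {ffun 'I_n -> 'I_m}) x := #|[set y | keyf f y < keyf f x]|.

Lemma rk_lt n m (f : {ffun 'I_n -> 'I_m}) x : rk f x < n.
Proof.
rewrite /rk; have : [set y | keyf f y < keyf f x] \subset [set~ x].
  by apply/subsetP => y; rewrite !inE; apply: contraTN => /eqP ->; rewrite ltnn.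
move/subset_leq_card; rewrite cardsC1 card_ord.
by case: n f x => [|n] f [] //.
Qed.

Lemma rk_mono n m (f : {ffun 'I_n -> 'I_m}) x y :
  keyf f x < keyf f y -> rk f x < rk f y.
Proof.
move=> H; apply: proper_card; apply/properP; split.
  by apply/subsetP => z; rewrite !inE => /ltn_trans; apply.
by exists x; rewrite !inE ?ltnn.
Qed.

Lemma rk_ltE n m (f : {ffun 'I_n -> 'I_m}) x y :
  (rk f x < rk f y) = (keyf f x < keyf f y).
Proof.
case: (ltngtP (keyf f x) (keyf f y)) => H.
- by rewrite rk_mono.
- by apply/negbTE; rewrite -leqNgt ltnW // rk_mono.
- by rewrite (keyf_inj H) ltnn.
Qed.

Definition rko n m (f : {ffun 'I_n -> 'I_m}) x : 'I_n := Ordinal (rk_lt f x).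

Lemma rko_inj n m (f : {ffun 'I_n -> 'I_m}) : injective (rko f).
Proof.
move=> x y E; apply: (@keyf_inj n m f).
have E' : rk f x = rk f y by move: E => /(congr1 val).
case: (ltngtP (keyf f x) (keyf f y)) => H //.
- by move: (rk_mono H); rewrite E' ltnn.
- by move: (rk_mono H); rewrite E' ltnn.
Qed.

Definition srt n m (f : {ffun 'I_n -> 'I_m}) : 'S_n := (perm (@rko_inj n m f))^-1.

Lemma srt_rko n m (f : {ffun 'I_n -> 'I_m}) x : srt f (rko f x) = x.
Proof. by rewrite /srt -(permE (@rko_inj n m f)) permK. Qed.

Lemma rko_srt n m (f : {ffun 'I_n -> 'I_m}) i : rko f (srt f i) = i.
Proof. by rewrite /srt -(permE (@rko_inj n m f)) permKV. Qed.

Lemma srt_ltE n m (f : {ffun 'I_n -> 'I_m}) i j :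
  (keyf f (srt f i) < keyf f (srt f j)) = (i < j).
Proof.
by rewrite -rk_ltE -[rk f _]/(val (rko f _)) -[rk f (srt f j)]/(val (rko f _)) !rko_srt.
Qed.

Lemma srt_fle n m (f : {ffun 'I_n -> 'I_m}) (i j : 'I_n) :
  i <= j -> f (srt f i) <= f (srt f j).
Proof.
rewrite leq_eqVlt => /orP[/eqP/val_inj -> //|].
by rewrite -(srt_ltE f) keyf_lt => /orP[/ltnW|/andP[/eqP ->]].
Qed.

Definition cnt n (B : {set 'I_n}) (j : nat) := #|[set b in B | nat_of_ord b < j]|.

Lemma cnt_S n (B : {set 'I_n.+1}) j : j < n.+1 ->
  cnt B j.+1 = cnt B j + ((inord j : 'I_n.+1) \in B).
Proof.
move=> hj; rewrite /cnt.
case: (boolP ((inord j : 'I_n.+1) \in B)) => hin.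
- rewrite (_ : [set b in B | nat_of_ord b < j.+1] = inord j |: [set b in B | nat_of_ord b < j]).
    by rewrite cardsU1 !inE /= inordK // ltnn andbF /= addnC.
  apply/setP => b; rewrite !inE ltnS leq_eqVlt.
  case: (eqVneq b (inord j)) => [->|ne]; first by rewrite inordK // eqxx hin.
  have -> : (val b == j) = false by apply: contraNF ne => /eqP <-; rewrite inord_val.
  by [].
- rewrite addn0; apply: eq_card => b; rewrite !inE ltnS leq_eqVlt.
  case: (eqVneq (val b) j) => [E|ne] //=.
  have -> : b = inord j by rewrite -E inord_val.
  by rewrite (negbTE hin).
Qed.

Lemma cnt_le n (B : {set 'I_n}) j : cnt B j <= #|B|.
Proof. by apply: subset_leq_card; apply/subsetP => b; rewrite inE => /andP[]. Qed.

Lemma cnt_full n (B : {set 'I_n}) j : n <= j -> cnt B j = #|B|.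
Proof.
move=> hj; apply: eq_card => b; rewrite !inE.
by rewrite (leq_trans (ltn_ord b) hj) andbT.
Qed.

Lemma cnt_mono n (B : {set 'I_n}) i j : i <= j -> cnt B i <= cnt B j.
Proof.
move=> hij; apply: subset_leq_card; apply/subsetP => b; rewrite !inE.
by case/andP => -> /leq_trans; apply.
Qed.

Lemma cnt_lt n (B : {set 'I_n}) (b : 'I_n) j : b \in B -> b < j -> cnt B b < cnt B j.
Proof.
move=> hb hbj; apply: proper_card; apply/properP; split.
  apply/subsetP => c; rewrite !inE; case/andP => -> /= /ltn_trans; apply; exact: hbj.
by exists b; rewrite !inE ?hb ?hbj ?ltnn.
Qed.

Lemma cnt_inj n (B : {set 'I_n}) (b c : 'I_n) : b \in B -> c \in B ->
  cnt B b = cnt B c -> b = c.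
Proof.
move=> hb hc E; apply: val_inj; case: (ltngtP b c) => // H.
- by move: (cnt_lt hb H); rewrite E ltnn.
- by move: (cnt_lt hc H); rewrite E ltnn.
Qed.

Definition B0 n m (f : {ffun 'I_n.+1 -> 'I_m}) : {set 'I_n.+1} :=
  [set j : 'I_n.+1 | (j < n) && (f (srt f j) < f (srt f (inord j.+1)))].

Definition surjf n m (f : {ffun 'I_n -> 'I_m}) := forall t, exists x, f x = t.

Lemma srt_step n m (f : {ffun 'I_n.+1 -> 'I_m.+1}) j : surjf f -> j < n ->
  f (srt f (inord j.+1)) <= (f (srt f (inord j))).+1.
Proof.
move=> hs hj; rewrite leqNgt; apply/negP => H.
have hv : (f (srt f (inord j))).+1 < m.+1.
  exact: leq_trans H (ltnW (ltn_ord _)).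
have [x hx] := hs (Ordinal hv).
have hx2 : f (srt f (rko f x)) = Ordinal hv.
  by rewrite -hx; congr (f _); apply: srt_rko.
have [hi|hi] := leqP (rko f x) (inord j : 'I_n.+1).
- by have := srt_fle f hi; rewrite hx2 /= ltnn.
- have hi' : (inord j.+1 : 'I_n.+1) <= rko f x.
    by move: hi; rewrite !inordK // ltnW.
  by have := srt_fle f hi'; rewrite hx2 /= leqNgt H.
Qed.

Lemma srt_cnt n m (f : {ffun 'I_n.+1 -> 'I_m.+1}) : surjf f ->
  forall j : 'I_n.+1, (f (srt f j) : nat) = cnt (B0 f) j.
Proof.
move=> hs.
suff H : forall j, j < n.+1 -> (f (srt f (inord j)) : nat) = cnt (B0 f) j.
  by move=> j; rewrite -H // inord_val.
elim=> [_|j IH hj].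
- have -> : cnt (B0 f) 0 = 0 by apply: eq_card0 => b; rewrite !inE ltn0 andbF.
  have [x hx] := hs ord0.
  have hx2 : f (srt f (rko f x)) = ord0 by rewrite -hx; congr (f _); apply: srt_rko.
  have hi : (inord 0 : 'I_n.+1) <= rko f x by rewrite inordK.
  by have := srt_fle f hi; rewrite hx2 /= leqn0 => /eqP.
- have hj' : j < n.+1 by apply: ltnW.
  rewrite cnt_S // -IH // inE inordK //=.
  have hle : (inord j : 'I_n.+1) <= (inord j.+1 : 'I_n.+1) by rewrite !inordK.
  have hjn : j < n by [].
  have := srt_fle f hle; have := srt_step hs hjn.
  rewrite hjn /=.
  case: (ltngtP (f (srt f (inord j))) (f (srt f (inord j.+1)))) => h; lia.
Qed.

Lemma card_bigcup_le (I T : finType) (P : pred I) (F : I -> {set T}) :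
  #|\bigcup_(i | P i) F i| <= \sum_(i | P i) #|F i|.
Proof.
elim/big_rec2: _ => [|i A s _ H]; first by rewrite cards0.
by rewrite cardsU (leq_trans (leq_subr _ _)) // leq_add2l.
Qed.

Lemma card_lt N j : j <= N -> #|[set i : 'I_N | i < j]| = j.
Proof.
case: N => [|N]; first by rewrite leqn0 => /eqP ->; apply: eq_card0 => i; rewrite inE.
elim: j => [_|j IH hj]; first by apply: eq_card0 => i; rewrite inE.
have := cnt_S [set: 'I_N.+1] hj; rewrite inE addn1 /cnt.
have -> : [set b in [set: 'I_N.+1] | nat_of_ord b < j] = [set i : 'I_N.+1 | i < j].
  by apply/setP => i; rewrite !inE.
have -> : [set b in [set: 'I_N.+1] | nat_of_ord b < j.+1] = [set i : 'I_N.+1 | i < j.+1].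
  by apply/setP => i; rewrite !inE.
by rewrite IH // ltnW.
Qed.

Lemma descentE n (w : 'S_n.+1) (i : 'I_n.+1) : i < n ->
  descent_at w i = (w (inord i.+1) < w i).
Proof.
move=> hi; apply/existsP/idP => [[j /andP[/eqP hj hw]]|hw].
  by have <- : j = inord i.+1 by rewrite -hj inord_val.
by exists (inord i.+1); rewrite /= inordK // eqxx.
Qed.

Definition Dset n (w : 'S_n) := [set i : 'I_n | ((val i).+1 < n) && descent_at w i].

Definition Pset r n k := [set p : 'S_n * {set 'I_n} |
      [&& p.2 \subset [set i : 'I_n | (val i).+1 < n],
          #|p.2| == r.-1 &
          #|[set i : 'I_n | ((val i).+1 < n) && (i \notin p.2)
                           && descent_at p.1 i]| == k]].

Lemma eulerianE r n k : eulerian_r r n k = #|Pset r n k|.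
Proof. by []. Qed.

Lemma Dset_diff n (w : 'S_n) (S : {set 'I_n}) :
  [set i : 'I_n | ((val i).+1 < n) && (i \notin S) && descent_at w i] = Dset w :\: S.
Proof. by apply/setP => i; rewrite !inE; case: (i \in S); rewrite ?andbF ?andbT. Qed.

Definition Bset n (p : 'S_n * {set 'I_n}) := p.2 :|: Dset p.1.

Definition psi n m (p : 'S_n.+1 * {set 'I_n.+1}) :
  {ffun 'I_n.+1 -> 'I_m.+1} * {set 'I_m.+1} :=
  ([ffun x => inord (cnt (Bset p) ((p.1^-1)%g x))],
   [set (inord (cnt (Bset p) (nat_of_ord s)) : 'I_m.+1) | s : 'I_n.+1 in p.2]).

Definition sigma n m (q : {ffun 'I_n.+1 -> 'I_m.+1} * {set 'I_m.+1}) :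
  'S_n.+1 * {set 'I_n.+1} :=
  (srt q.1, [set j in B0 q.1 | q.1 (srt q.1 j) \in q.2]).

Lemma Bset_card r n k (p : 'S_n * {set 'I_n}) : p \in Pset r n k ->
  #|Bset p| = k + r.-1.
Proof.
rewrite inE => /and3P[_ /eqP h1 /eqP h2]; rewrite Dset_diff in h2.
rewrite /Bset.
have -> : p.2 :|: Dset p.1 = p.2 :|: (Dset p.1 :\: p.2).
  by apply/setP => i; rewrite !inE; case: (i \in p.2).
rewrite cardsU.
have -> : p.2 :&: (Dset p.1 :\: p.2) = set0.
  by apply/setP => i; rewrite !inE; case: (i \in p.2); rewrite ?andbF.
by rewrite cards0 subn0 h1 h2 addnC.
Qed.

Lemma Bset_sub r n k (p : 'S_n * {set 'I_n}) : p \in Pset r n k ->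
  forall b, b \in Bset p -> (val b).+1 < n.
Proof.
rewrite inE => /and3P[/subsetP hs _ _] b; rewrite inE => /orP[/hs|]; rewrite inE //.
by case/andP.
Qed.

Lemma mono_ltE N (g : 'I_N -> nat) :
  (forall i j : 'I_N, i < j -> g i < g j) -> forall i j, (g i < g j) = (i < j).
Proof.
move=> hg i j; case: (ltngtP i j) => h.
- by rewrite hg.
- by apply/negbTE; rewrite -leqNgt ltnW // hg.
- by rewrite (val_inj h) ltnn.
Qed.

Lemma card_perm_pre N (w : 'S_N) (P : pred 'I_N) :
  #|[set y | P ((w^-1)%g y)]| = #|[set i | P i]|.
Proof.
rewrite -[RHS](card_imset _ (@perm_inj _ w)); apply: eq_card => y.
apply/idP/imsetP => [hy|[i hi ->]].
  exists ((w^-1)%g y); last by rewrite permKV.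
  by move: hy; rewrite !inE.
by rewrite inE permK; rewrite inE in hi.
Qed.

Lemma psi_fw r n k (p : 'S_n.+1 * {set 'I_n.+1}) (j : 'I_n.+1) :
  p \in Pset r n.+1 k ->
  ((psi (k + r.-1) p).1 (p.1 j) : nat) = cnt (Bset p) j.
Proof.
move=> hp; rewrite /psi ffunE /= permK inordK // ltnS -(Bset_card hp).
exact: cnt_le.
Qed.

Lemma psi_key r n k (p : 'S_n.+1 * {set 'I_n.+1}) : p \in Pset r n.+1 k ->
  forall i j : 'I_n.+1, i < j ->
  keyf (psi (k + r.-1) p).1 (p.1 i) < keyf (psi (k + r.-1) p).1 (p.1 j).
Proof.
move=> hp.
have step : forall j, j < n -> keyf (psi (k + r.-1) p).1 (p.1 (inord j)) <
                               keyf (psi (k + r.-1) p).1 (p.1 (inord j.+1)).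
  move=> j hj; have hj1 : j < n.+1 by apply: leqW.
  rewrite keyf_lt !(psi_fw _ hp) !inordK // cnt_S //.
  case: (boolP ((inord j : 'I_n.+1) \in Bset p)) => hin; first by rewrite addn1 ltnSn.
  rewrite addn0 eqxx ltnn /=.
  have hD : (inord j : 'I_n.+1) \notin Dset p.1.
    by apply: contra hin => h; rewrite /Bset inE h orbT.
  rewrite inE /= inordK // ltnS hj /= descentE ?inordK // in hD.
  rewrite ltn_neqAle leqNgt hD andbT.
  apply/negP => /eqP/val_inj/perm_inj/(congr1 (@nat_of_ord _)).
  by rewrite !inordK //; lia.
suff H : forall d i, i + d.+1 < n.+1 ->
  keyf (psi (k + r.-1) p).1 (p.1 (inord i)) <
  keyf (psi (k + r.-1) p).1 (p.1 (inord (i + d.+1))).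
  move=> i j hij; have := H (j - i.+1) i.
  rewrite !inord_val (_ : i + (j - i.+1).+1 = j) ?inord_val; last by lia.
  by apply.
elim=> [|d IH] i hid; first by rewrite addn1 step //; lia.
apply: ltn_trans (IH i _) _; first by lia.
by rewrite (_ : i + d.+2 = (i + d.+1).+1) ?step //; lia.
Qed.

Lemma psi_srt r n k (p : 'S_n.+1 * {set 'I_n.+1}) : p \in Pset r n.+1 k ->
  srt (psi (k + r.-1) p).1 = p.1.
Proof.
move=> hp; set f := (psi (k + r.-1) p).1; set w := p.1.
have mono := mono_ltE (psi_key hp).
apply/permP => j.
suff E : rko f (w j) = j by rewrite -{1}E srt_rko.
apply: val_inj => /=; rewrite /rk.
have -> : [set y | keyf f y < keyf f (w j)] = [set y | (w^-1)%g y < j].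
  apply/setP => y; rewrite !inE -{1}(permKV w y).
  by rewrite (mono ((w^-1)%g y) j).
rewrite (card_perm_pre w (fun i : 'I_n.+1 => i < j)).
by apply: card_lt; apply: ltnW.
Qed.

Lemma psi_B0 r n k (p : 'S_n.+1 * {set 'I_n.+1}) : p \in Pset r n.+1 k ->
  B0 (psi (k + r.-1) p).1 = Bset p.
Proof.
move=> hp; apply/setP => j; rewrite inE (psi_srt hp).
case: (ltnP j n) => hj.
- rewrite andTb !(psi_fw _ hp) inordK //.
  rewrite cnt_S // inord_val.
  by case: (j \in Bset p); rewrite ?addn1 ?ltnSn ?addn0 ?ltnn.
- rewrite andFb.
  apply/esym/negP => /(Bset_sub hp); rewrite ltnS => h.
  by move: (leq_trans h hj); rewrite ltnn.
Qed.

Lemma sigma_psi r n k (p : 'S_n.+1 * {set 'I_n.+1}) : p \in Pset r n.+1 k ->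
  sigma (psi (k + r.-1) p) = p.
Proof.
move=> hp; rewrite /sigma (psi_srt hp) (psi_B0 hp).
case: p hp => w S hp /=; congr pair.
apply/setP => j; rewrite inE.
have hm : forall b, b \in Bset (w, S) -> cnt (Bset (w, S)) b < (k + r.-1).+1.
  by move=> b _; rewrite ltnS -(Bset_card hp); apply: cnt_le.
apply/andP/idP => [[hjB /imsetP[s hs E]]|hj].
  have hsB : s \in Bset (w, S) by rewrite /Bset inE hs.
  move: E => /(congr1 (@nat_of_ord _)).
  rewrite (psi_fw _ hp) inordK ?hm // => /(cnt_inj hjB hsB) ->.
  exact: hs.
have hjB : j \in Bset (w, S) by rewrite /Bset inE hj.
split=> //; apply/imsetP; exists j => //.
apply: val_inj; rewrite /= (psi_fw _ hp).
by rewrite inordK ?hm.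
Qed.

Lemma srt_lt_of_f n m (f : {ffun 'I_n -> 'I_m}) a b :
  f (srt f a) < f (srt f b) -> a < b.
Proof. by apply: contraTT; rewrite -!leqNgt; apply: srt_fle. Qed.

Lemma srt_blk n m (f : {ffun 'I_n -> 'I_m}) (a b : 'I_n) :
  f (srt f a) = f (srt f b) -> a <= b -> srt f a <= srt f b.
Proof.
move=> E; rewrite leq_eqVlt => /orP[/eqP/val_inj -> //|].
rewrite -(srt_ltE f) keyf_lt E ltnn eqxx /= => /ltnW.
done.
Qed.

Definition badf n m (f : {ffun 'I_n -> 'I_m.+1}) (S' : {set 'I_m.+1}) :=
  [exists t : 'I_m.+1, (t < m) && (t \notin S') &&
     [forall x, forall y, ((f x == t) && (f y == (t.+1) :> nat)) ==> (x < y)]].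

Lemma B0_sub n m (f : {ffun 'I_n.+1 -> 'I_m}) (j : 'I_n.+1) : j \in B0 f -> j < n.
Proof. by rewrite inE => /andP[]. Qed.

Lemma B0_next n m (f : {ffun 'I_n.+1 -> 'I_m.+1}) (j : 'I_n.+1) : surjf f ->
  j \in B0 f -> (f (srt f (inord j.+1)) : nat) = (f (srt f j)).+1.
Proof.
move=> hs hj; have hjn := B0_sub hj.
move: hj; rewrite inE hjn /= => hlt.
have := srt_step hs hjn; rewrite inord_val => hle.
by apply/eqP; rewrite eqn_leq hle hlt.
Qed.

Lemma B0_val n m (f : {ffun 'I_n.+1 -> 'I_m.+1}) (j : 'I_n.+1) : surjf f ->
  j \in B0 f -> f (srt f j) < m.
Proof.
move=> hs hj; have := B0_next hs hj => E.
by have := ltn_ord (f (srt f (inord j.+1))); rewrite E ltnS.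
Qed.

Lemma D_sub_B0 n m (f : {ffun 'I_n.+1 -> 'I_m}) : Dset (srt f) \subset B0 f.
Proof.
apply/subsetP => i; rewrite !inE ltnS => /andP[hi hd]; rewrite hi /=.
rewrite descentE // in hd.
have hlt : i < (inord i.+1 : 'I_n.+1) by rewrite inordK.
move: hlt; rewrite -(srt_ltE f) keyf_lt => /orP[// | /andP[_ h]].
by move: (ltn_trans h hd); rewrite ltnn.
Qed.

Lemma B0_card n m (f : {ffun 'I_n.+1 -> 'I_m.+1}) : surjf f -> #|B0 f| = m.
Proof.
move=> hs.
have E1 : cnt (B0 f) (@ord_max n) = #|B0 f|.
  apply: eq_card => b; rewrite [in LHS]inE /=.
  by apply/andP/idP => [[]//|hb]; split=> //; apply: B0_sub hb.
rewrite -E1 -srt_cnt //.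
have [x hx] := hs ord_max.
have hx2 : f (srt f (rko f x)) = ord_max by rewrite -hx; congr (f _); apply: srt_rko.
have := @srt_fle _ _ f (rko f x) ord_max (leq_ord _); rewrite hx2 /= => h.
by apply/eqP; rewrite eqn_leq h -ltnS ltn_ord.
Qed.

Lemma B0_img n m (f : {ffun 'I_n.+1 -> 'I_m.+1}) : surjf f ->
  [set f (srt f j) | j in B0 f] = [set t : 'I_m.+1 | t < m].
Proof.
move=> hs; apply/eqP; rewrite eqEcard; apply/andP; split.
  by apply/subsetP => t /imsetP[j hj ->]; rewrite inE B0_val.
rewrite card_lt // card_in_imset ?B0_card //.
move=> a b ha hb /(congr1 (@nat_of_ord _)); rewrite !srt_cnt //.
exact: cnt_inj.
Qed.

Lemma B0_inj n m (f : {ffun 'I_n.+1 -> 'I_m.+1}) : surjf f ->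
  {in B0 f &, injective (fun j => f (srt f j))}.
Proof.
move=> hs a b ha hb /(congr1 (@nat_of_ord _)); rewrite !srt_cnt //.
exact: cnt_inj.
Qed.

Lemma good_desc n m (f : {ffun 'I_n.+1 -> 'I_m.+1}) S' : surjf f -> ~~ badf f S' ->
  forall j, j \in B0 f -> f (srt f j) \notin S' -> j \in Dset (srt f).
Proof.
move=> hs hg j hj hS.
have hjn := B0_sub hj.
have hnext := B0_next hs hj.
have htm := B0_val hs hj.
move/existsPn: hg => /(_ (f (srt f j))); rewrite htm hS /=.
move/forallPn => [x /forallPn [y]]; rewrite negb_imply -leqNgt.
case/andP => /andP[/eqP hx /eqP hy] hyx.
have hx2 : f (srt f (rko f x)) = f (srt f j) by rewrite -hx; congr (f _); apply: srt_rko.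
have hy2 : f (srt f (rko f y)) = f (srt f (inord j.+1)).
  apply: val_inj; rewrite /= hnext -hy; congr (nat_of_ord (f _)); apply: srt_rko.
have ha : rko f x <= j.
  have : rko f x < (inord j.+1 : 'I_n.+1).
    by apply: (srt_lt_of_f (f := f)); rewrite hx2 hnext ltnSn.
  by rewrite inordK.
have hb : (inord j.+1 : 'I_n.+1) <= rko f y.
  rewrite inordK //; apply: (srt_lt_of_f (f := f)).
  by rewrite hy2 hnext ltnSn.
have h1 := srt_blk hx2 ha; rewrite srt_rko in h1.
have h2 := srt_blk (esym hy2) hb; rewrite srt_rko in h2.
rewrite inE /= ltnS hjn /= descentE //.
rewrite ltn_neqAle (leq_trans h2 (leq_trans hyx h1)) andbT.
apply/negP => /eqP/val_inj/perm_inj/(congr1 (@nat_of_ord _)).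
by rewrite inordK //; lia.
Qed.

Lemma sigma_good r n k (f : {ffun 'I_n.+1 -> 'I_(k + r.-1).+1}) S' :
  surjf f -> ~~ badf f S' ->
  S' \subset [set t : 'I_(k + r.-1).+1 | t < k + r.-1] -> #|S'| = r.-1 ->
  sigma (f, S') \in Pset r n.+1 k /\ psi (k + r.-1) (sigma (f, S')) = (f, S').
Proof.
move=> hs hg hsub hcard.
set m := k + r.-1 in f S' hs hg hsub hcard *.
set w := srt f; set S := [set j in B0 f | f (w j) \in S'].
have SB : S \subset B0 f by apply/subsetP => j; rewrite inE => /andP[].
have S'img : S' = [set f (w j) | j in S].
  apply/setP => t; apply/idP/imsetP => [ht|[j hj ->]].
    have : t \in [set t : 'I_m.+1 | t < m] by apply: (subsetP hsub).
    rewrite -(B0_img hs) => /imsetP[j hj E].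
    by exists j => //; rewrite inE hj -E ht.
  by move: hj; rewrite inE => /andP[].
have Scard : #|S| = r.-1.
  rewrite -hcard S'img card_in_imset //.
  by move=> a b ha hb; apply: (B0_inj hs); apply: (subsetP SB).
have BSD : Dset w :\: S = B0 f :\: S.
  apply/setP => j; rewrite !in_setD; case: (boolP (j \in S)) => //= hjS.
  apply/idP/idP => [hj|hj]; first exact: (subsetP (D_sub_B0 f)).
  apply: (good_desc hs hg hj).
  by move: hjS; rewrite in_set hj.
have Bs : Bset (w, S) = B0 f.
  apply/setP => j; rewrite /Bset /= in_setU.
  apply/idP/idP => [/orP[/(subsetP SB)//|/(subsetP (D_sub_B0 f))//]|hj].
  case: (boolP (j \in S)) => //= hjS.
  have : j \in Dset w :\: S by rewrite BSD in_setD hjS hj.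
  by rewrite in_setD => /andP[].
have hP : (w, S) \in Pset r n.+1 k.
  rewrite inE /= Scard eqxx /=; apply/andP; split.
    apply/subsetP => j /(subsetP SB) /B0_sub; rewrite inE ltnS.
    done.
  rewrite Dset_diff BSD cardsDS // B0_card // Scard /m.
  by rewrite addnK.
split=> //.
rewrite /psi /= Bs; congr pair.
  apply/ffunP => x; rewrite ffunE -srt_cnt // permKV.
  exact: inord_val.
rewrite [RHS]S'img; apply: eq_in_imset => j hj.
by rewrite -srt_cnt ?inord_val // (subsetP SB).
Qed.

Lemma ffact_le_exp N i : N ^_ i <= N ^ i.
Proof.
elim: i => [|i IH]; first by rewrite ffactn0 expn0.
by rewrite ffactnSr expnS mulnC leq_mul // leq_subr.
Qed.

Lemma bin_le_exp N i : 'C(N, i) <= N ^ i.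
Proof.
apply: leq_trans (ffact_le_exp N i); rewrite -bin_ffact.
by rewrite leq_pmulr // fact_gt0.
Qed.

Lemma pow_succ_le N m : N <= m -> (m.+1) ^ N <= N.+1 * m ^ N.
Proof.
move=> hNm; rewrite -addn1 expnDn.
have -> : N.+1 * m ^ N = \sum_(i < N.+1) m ^ N by rewrite sum_nat_const card_ord.
apply: leq_sum => i _; rewrite exp1n muln1.
have hi : i <= N by rewrite -ltnS.
have -> : m ^ N = m ^ i * m ^ (N - i) by rewrite -expnD subnKC.
rewrite leq_mul2r; apply/orP; right.
apply: leq_trans (bin_le_exp N i) _.
case: (posnP i) => [->|h0]; first by rewrite !expn0.
by rewrite leq_exp2r.
Qed.

Definition surjb n m (f : {ffun 'I_n -> 'I_m}) := [forall t, [exists x, f x == t]].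

Lemma surjbP n m (f : {ffun 'I_n -> 'I_m}) : reflect (surjf f) (surjb f).
Proof.
apply: (iffP forallP) => [h t|h t].
  by have /existsP[x /eqP hx] := h t; exists x.
by have [x hx] := h t; apply/existsP; exists x; rewrite hx.
Qed.

Lemma avoid_card n m (v : 'I_m.+1) :
  #|[set f : {ffun 'I_n -> 'I_m.+1} | [forall x, f x != v]]| = m ^ n.
Proof.
have -> : #|[set f : {ffun 'I_n -> 'I_m.+1} | [forall x, f x != v]]| =
          #|@ffun_on 'I_n (predC1 v)|.
  apply: eq_card => f; rewrite inE; apply/forallP/ffun_onP => h x.
    by rewrite !inE h.
  by have := h x; rewrite !inE.
by rewrite card_ffun_on cardC1 !card_ord.
Qed.

Lemma nonsurj_card n m :
  #|[set f : {ffun 'I_n -> 'I_m.+1} | ~~ surjb f]| <= m.+1 * m ^ n.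
Proof.
have sub : [set f : {ffun 'I_n -> 'I_m.+1} | ~~ surjb f] \subset
   \bigcup_(v : 'I_m.+1) [set f : {ffun 'I_n -> 'I_m.+1} | [forall x, f x != v]].
  apply/subsetP => f; rewrite inE negb_forall => /existsP[v hv].
  apply/bigcupP; exists v => //; rewrite inE; apply/forallP => x.
  by apply: contra hv => /eqP hx; apply/existsP; exists x; rewrite hx.
apply: leq_trans (subset_leq_card sub) _.
apply: leq_trans (card_bigcup_le _ _) _.
under eq_bigr do rewrite avoid_card.
by rewrite sum_nat_const card_ord.
Qed.

Definition NM N m (g : {ffun 'I_N -> 'I_m}) :=
  [set x : 'I_N | [exists y : 'I_N, (y < x) && (g y == g x)]].

Lemma NM_card N m (g : {ffun 'I_N -> 'I_m}) : surjb g -> #|NM g| = N - m.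
Proof.
move/surjbP => hs.
have inj : {in ~: NM g &, injective g}.
  move=> x y; rewrite !inE !negb_exists => /forallP hx /forallP hy E.
  apply: val_inj; case: (ltngtP x y) => // h.
  - by have := hy x; rewrite h E eqxx.
  - by have := hx y; rewrite h E eqxx.
have hmin : #|~: NM g| = m.
  rewrite -(card_in_imset inj).
  transitivity #|[set: 'I_m]|; last by rewrite cardsT card_ord.
  apply: eq_card => t; rewrite in_setT; apply/imsetP.
  have [x0 hx0] := hs t.
  have hP : g x0 == t by rewrite hx0.
  have [x hx hm] := @arg_minnP _ x0 (fun x => g x == t) (fun x => nat_of_ord x) hP.
  exists x; last by rewrite (eqP hx).
  rewrite !inE negb_exists; apply/forallP => y; apply/negP => /andP[hyx hy].
  by have := hm y; rewrite (eqP hy) (eqP hx) eqxx => /(_ isT); rewrite leqNgt hyx.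
by rewrite cardsCs card_ord hmin.
Qed.

Definition recf N m (g : {ffun 'I_N -> 'I_m.+1}) (x : 'I_N) : {ffun 'I_N -> 'I_m.+2} :=
  [ffun y => inord (g y + ((g x < g y) || ((g y == g x) && (x <= y))))].

Definition BFset N M := [set f : {ffun 'I_N -> 'I_M.+1} | surjb f &&
  [exists t : 'I_M.+1, (t < M) &&
     [forall x, forall y, ((f x == t) && (f y == t.+1 :> nat)) ==> (x < y)]]].

Lemma BF_sub N m : BFset N m.+1 \subset
  \bigcup_(g : {ffun 'I_N -> 'I_m.+1} | surjb g) (recf g @: NM g).
Proof.
apply/subsetP => f; rewrite inE => /andP[/surjbP hs /existsP[t /andP[htm /forallP H]]].
have H' : forall x y, (f x : nat) = t -> (f y : nat) = t.+1 -> x < y.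
  move=> x y hx hy; have /forallP/(_ y) := H x.
  have e1 : (f x == t) = true by apply/eqP/val_inj.
  by rewrite e1 /= hy eqxx.
pose g : {ffun 'I_N -> 'I_m.+1} := [ffun y => inord (f y - (t < f y))].
have gE : forall y, (g y : nat) = f y - (t < f y).
  move=> y; rewrite ffunE inordK //; have := ltn_ord (f y); move: htm.
  case: (ltnP t (f y)) => /= h1 h2 h3; lia.
have [x0 hx0] := hs (inord t.+1).
have hP : (f x0 : nat) == t.+1 by rewrite hx0 inordK.
have [x hx hxm] := @arg_minnP _ x0 (fun x => (f x : nat) == t.+1) (fun x => nat_of_ord x) hP.
move/eqP: hx => hx.
apply/bigcupP; exists g.
  apply/surjbP => s.
  case: (ltnP s t) => hst.
    have [y hy] := hs (inord s).
    exists y; apply: val_inj => /=; rewrite gE hy inordK; last by have := ltn_ord s; lia.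
    by rewrite ltnNge ltnW // subn0.
  have [y hy] := hs (inord s.+1).
  exists y; apply: val_inj => /=; rewrite gE hy inordK; last by have := ltn_ord s; lia.
  by rewrite ltnS hst subn1.
have gx : (g x : nat) = t by rewrite gE hx ltnSn subn1.
apply/imsetP; exists x.
  have [y hy] := hs (inord t).
  have hyt : (f y : nat) = t by rewrite hy inordK //; lia.
  rewrite inE; apply/existsP; exists y; rewrite (H' y x) //=.
  by apply/eqP/val_inj => /=; rewrite gx gE hyt ltnn subn0.
apply/ffunP => y; apply: val_inj => /=; rewrite ffunE inordK; last first.
  by have := ltn_ord (g y); case: (_ || _); lia.
have eqE : (g y == g x) = (f y - (t < f y) == t).
  by rewrite -val_eqE /= gE gx.
rewrite eqE gE gx.
case: (ltngtP (f y) t) => h1.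
- by rewrite subn0 ltnNge (ltnW h1) (ltn_eqF h1) addn0.
- case: (ltngtP (f y) t.+1) => h2; first by lia.
  + have h3 : t < (f y).-1 by lia.
    by rewrite subn1 h3 /= addn1 prednK // (leq_ltn_trans (leq0n t) h1).
  + have hxy : x <= y by apply: hxm; rewrite /= h2.
    by rewrite h2 subn1 /= ltnn eqxx hxy addn1.
- have hyx : y < x by apply: H'.
  by rewrite subn0 h1 ltnn eqxx /= leqNgt hyx addn0.
Qed.

Lemma BF_card N M : #|BFset N M| <= (N - M) * M ^ N.
Proof.
case: M => [|m].
  suff -> : BFset N 0 = set0 by rewrite cards0.
  apply/setP => f; rewrite !inE; apply/negbTE.
  rewrite negb_and negb_exists orbC; apply/orP; left.
  by apply/forallP => t; rewrite ltn0.
apply: leq_trans (subset_leq_card (BF_sub N m)) _.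
apply: leq_trans (card_bigcup_le _ _) _.
apply: (@leq_trans (\sum_(g : {ffun 'I_N -> 'I_m.+1} | surjb g) #|NM g|)).
  by apply: leq_sum => g _; apply: leq_imset_card.
rewrite (eq_bigr (fun _ => N - m.+1)); last by move=> g hg; rewrite NM_card.
rewrite sum_nat_const mulnC leq_mul2l; apply/orP; right.
by apply: leq_trans (max_card _) _; rewrite card_ffun !card_ord.
Qed.

Definition Draws m r := [set A : {set 'I_m.+1} | A \subset [set t : 'I_m.+1 | t < m] & #|A| == r.-1].

Lemma Draws_card m r : #|Draws m r| = 'C(m, r.-1).
Proof. by rewrite /Draws cards_draws card_lt. Qed.

Definition Qset N m r := setX [set: {ffun 'I_N -> 'I_m.+1}] (Draws m r).

Lemma Qset_card N m r : #|Qset N m r| = m.+1 ^ N * 'C(m, r.-1).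
Proof. by rewrite cardsX cardsT card_ffun !card_ord Draws_card. Qed.

Lemma psi_Q r n k (p : 'S_n.+1 * {set 'I_n.+1}) : p \in Pset r n.+1 k ->
  psi (k + r.-1) p \in Qset n.+1 (k + r.-1) r.
Proof.
move=> hp; rewrite inE in_setT /= inE.
have hm : forall s, s \in p.2 -> cnt (Bset p) s < k + r.-1.
  move=> s hs; rewrite -(Bset_card hp).
  have hsB : s \in Bset p by rewrite /Bset inE hs.
  have hsn := Bset_sub hp hsB.
  apply: leq_trans (cnt_lt (j := s.+1) hsB (ltnSn s)) _.
  exact: cnt_le.
apply/andP; split.
  apply/subsetP => t /imsetP[s hs ->]; rewrite inE inordK ?hm //.
  by apply: ltnW; rewrite ltnS hm.
move: hp; rewrite inE => /and3P[_ /eqP hc _].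
rewrite card_in_imset ?hc //.
move=> a b ha hb /(congr1 (@nat_of_ord _)).
rewrite !inordK; last 2 first.
- by apply: ltnW; rewrite ltnS hm.
- by apply: ltnW; rewrite ltnS hm.
apply: cnt_inj; by rewrite /Bset inE ?ha ?hb.
Qed.

Lemma psi_inj r n k : {in Pset r n.+1 k &, injective (psi (k + r.-1))}.
Proof. by move=> x y hx hy E; rewrite -(sigma_psi hx) -(sigma_psi hy) E. Qed.

Lemma upper r n k :
  #|Pset r n.+1 k| <= (k + r.-1).+1 ^ n.+1 * 'C(k + r.-1, r.-1).
Proof.
rewrite -Qset_card -(card_in_imset (@psi_inj r n k)).
by apply: subset_leq_card; apply/subsetP => q /imsetP[p hp ->]; apply: psi_Q.
Qed.

Lemma cardU_le (T : finType) (A B : {set T}) : #|A :|: B| <= #|A| + #|B|.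
Proof. by rewrite cardsU leq_subr. Qed.

Lemma lower r n k :
  (k + r.-1).+1 ^ n.+1 * 'C(k + r.-1, r.-1) <=
  #|Pset r n.+1 k| + (k + r.-1).+1 * (k + r.-1) ^ n.+1 * 'C(k + r.-1, r.-1)
  + (n.+1 - (k + r.-1)) * (k + r.-1) ^ n.+1 * 'C(k + r.-1, r.-1).
Proof.
set m := k + r.-1.
set Good := [set q in Qset n.+1 m r | surjb q.1 && ~~ badf q.1 q.2].
have hG : #|Good| <= #|Pset r n.+1 k|.
  rewrite -(card_in_imset (@psi_inj r n k)).
  apply: subset_leq_card; apply/subsetP => -[f S'].
  rewrite !inE /= => /and3P[/andP[hsub /eqP hc] /surjbP hs hb].
  have [hP hE] := sigma_good hs hb hsub hc.
  by apply/imsetP; exists (sigma (f, S')).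
have hsub : Qset n.+1 m r \subset
   Good :|: setX [set f | ~~ surjb f] (Draws m r) :|: setX (BFset n.+1 m) (Draws m r).
  apply/subsetP => -[f S'] hq.
  have hD : (S' \subset [set t : 'I_m.+1 | t < m]) && (#|S'| == r.-1).
    by move: hq; rewrite !inE.
  rewrite !inE /= hD /=.
  case: (boolP (surjb f)) => hs /=; last by rewrite ?orbT.
  case: (boolP (badf f S')) => hb /=; last by rewrite ?orbT.
  have hbf : [exists t : 'I_m.+1, (t < m) &&
     [forall x, forall y, ((f x == t) && (f y == t.+1 :> nat)) ==> (x < y)]].
    move: hb => /existsP[t /andP[/andP[ht _] hf]].
    by apply/existsP; exists t; rewrite ht.
  by rewrite hbf ?orbT.
have := subset_leq_card hsub.
rewrite Qset_card => h1.
apply: leq_trans h1 _.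
apply: leq_trans (cardU_le _ _) _.
apply: leq_add.
  apply: leq_trans (cardU_le _ _) _.
  apply: leq_add => //.
  rewrite cardsX Draws_card leq_mul2r; apply/orP; right.
  exact: nonsurj_card.
rewrite cardsX Draws_card leq_mul2r; apply/orP; right.
exact: BF_card.
Qed.

Unset Implicit Arguments.
Import Order.TTheory GRing.Theory Num.Theory.

Theorem lemma2p7 (n r k : nat) (hn : 1 <= n) (hr : 1 <= r) :
  (('C(k + r - 1, r - 1))%:Z * (((k + r) ^ n)%:Z - (n.+1 * (k + r - 1) ^ n)%:Z)
     <= (eulerian_r r n k)%:Z)%R
  /\ eulerian_r r n k <= 'C(k + r - 1, r - 1) * (k + r) ^ n.
Proof.
case: n hn => [//|n] _.
have e1 : k + r - 1 = k + r.-1 by lia.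
have e2 : r - 1 = r.-1 by lia.
have e3 : k + r = (k + r.-1).+1 by lia.
rewrite e1 e2 e3 eulerianE.
have hl := lower r n k.
have hu := upper r n k.
set m := k + r.-1 in hl hu *.
set C := 'C(m, r.-1) in hl hu *.
set E := #|Pset r n.+1 k| in hl hu *.
split; last by rewrite mulnC.
have key : m.+1 ^ n.+1 * C <= E + n.+2 * m ^ n.+1 * C.
  case: (leqP m n.+1) => hm.
    apply: leq_trans hl _; rewrite -addnA leq_add2l -!mulnDl.
    by rewrite (_ : m.+1 + (n.+1 - m) = n.+2) //; lia.
  apply: leq_trans (leq_addl _ _); rewrite leq_mul2r; apply/orP; right.
  by apply: pow_succ_le; apply: ltnW.
rewrite GRing.mulrBr -!PoszM lerBlDr -PoszD lez_nat.
lia.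
Qed.
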